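(* Let $G$ be a Lie group, $M$ a smooth manifold, $\Phi : G\times M\to M$ a smooth left action, and $\phi : \mathbb{R}\times M\to M$ a flow. Then the following are equivalent: (i) for every $t\in\mathbb{R}$, the diffeomorphism $\phi_t$ is weakly $\Phi$-invariant; (ii) there exists $\varepsilon>0$ such that for every $t\in(-\varepsilon,\varepsilon)$, $\phi_t$ is weakly $\Phi$-invariant.
   Context: A flow is a smooth map $\phi:\mathbb{R}\times M\to M$ with $\phi_{t_1+t_2} = \phi_{t_1}\circ\phi_{t_2}$ and $\phi_0 = \mathrm{id}_M$. A diffeomorphism $f : M\to M$ is weakly $\Phi$-invariant if there exists a map $\sigma : G\to G$ such that $f = \Phi_{\sigma(g)^{-1}}\circ f\circ\Phi_g$ for all $g\in G$, where $\Phi_g = \Phi(g,\cdot)$. *)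

(* Defs.v *)
From Stdlib Require Import Reals.
Open Scope R_scope.

Definition is_group {G : Type} (mul : G -> G -> G) (inv : G -> G) (e : G) : Prop :=
  (forall a b c, mul a (mul b c) = mul (mul a b) c) /\
  (forall a, mul e a = a) /\ (forall a, mul a e = a) /\
  (forall a, mul (inv a) a = e) /\ (forall a, mul a (inv a) = e).

Definition is_left_action {G M : Type} (mul : G -> G -> G) (e : G)
  (Phi : G -> M -> M) : Prop :=
  (forall x, Phi e x = x) /\
  (forall g h x, Phi (mul g h) x = Phi g (Phi h x)).

Definition is_flow {M : Type} (phi : R -> M -> M) : Prop :=
  (forall x, phi 0 x = x) /\
  (forall t1 t2 x, phi (t1 + t2) x = phi t1 (phi t2 x)).

Definition weakly_invariant {G M : Type} (inv : G -> G) (Phi : G -> M -> M)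
  (f : M -> M) : Prop :=
  exists sigma : G -> G, forall g x, f x = Phi (inv (sigma g)) (f (Phi g x)).

(* Main.v *)
Require Import Defs.
From Stdlib Require Import Reals Lra Lia ZArith.
Open Scope R_scope.

Lemma comp_wi (G M : Type) (mul : G -> G -> G) (inv : G -> G) (e : G)
  (Phi : G -> M -> M) (HG : is_group mul inv e) (HPhi : is_left_action mul e Phi)
  (F f h : M -> M) :
  (forall x, F x = f (h x)) ->
  weakly_invariant inv Phi f -> weakly_invariant inv Phi h ->
  weakly_invariant inv Phi F.
Proof.
  destruct HG as [Ha [Hl [Hr [Hil Hir]]]]. destruct HPhi as [He Hm].
  assert (Hii : forall b, inv (inv b) = b).
  { intro b. rewrite <- (Hr (inv (inv b))), <- (Hil b), Ha, Hil, Hl. reflexivity. }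
  intros HF [sf Hf] [sh Hh].
  exists (fun g => inv (sf (inv (sh g)))). intros g x.
  rewrite Hii, !HF.
  set (a := inv (sh g)).
  rewrite (Hh g x). fold a.
  set (y := h (Phi g x)).
  rewrite (Hf a y), <- Hm, Hir, He. reflexivity.
Qed.

Theorem lemma1 (G M : Type) (mul : G -> G -> G) (inv : G -> G) (e : G)
  (Phi : G -> M -> M) (phi : R -> M -> M)
  (HG : is_group mul inv e) (HPhi : is_left_action mul e Phi)
  (Hphi : is_flow phi) :
  (forall t : R, weakly_invariant inv Phi (phi t)) <->
  (exists eps : R, 0 < eps /\
     forall t : R, -eps < t < eps -> weakly_invariant inv Phi (phi t)).
Proof.
  split.
  - intro H. exists 1. split; [lra|]. intros; apply H.
  - intros [eps [Heps H]] t.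
    destruct Hphi as [H0 Hadd].
    assert (Hk : forall s, -eps < s < eps -> forall k : nat,
               weakly_invariant inv Phi (phi (INR k * s))).
    { intros s Hs k. induction k as [|k IH].
      + replace (INR 0 * s) with 0 by (simpl; ring). apply H; lra.
      + apply (comp_wi G M mul inv e Phi HG HPhi _ (phi s) (phi (INR k * s))).
        * intro x. rewrite <- Hadd. f_equal. rewrite S_INR. ring.
        * apply H; lra.
        * exact IH. }
    set (r := Rabs t / eps).
    assert (Hr0 : 0 <= r) by (unfold r; apply Rmult_le_pos; [apply Rabs_pos|left; apply Rinv_0_lt_compat; lra]).
    destruct (archimed r) as [Hup _].
    set (z := up r) in *.
    assert (Hz : (1 <= z)%Z).
    { apply le_IZR. assert (IZR 0 < IZR z) by lra. apply lt_IZR in H1.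
      apply IZR_le. lia. }
    set (N := Z.to_nat z).
    assert (HN : INR N = IZR z).
    { unfold N. rewrite INR_IZR_INZ, Z2Nat.id by lia. reflexivity. }
    assert (HNp : 0 < INR N) by (rewrite HN; apply IZR_lt; lia).
    assert (Ht : t = INR N * (t / INR N)) by (field; lra).
    rewrite Ht. apply Hk.
    assert (Habs : Rabs t < eps * INR N).
    { rewrite HN. unfold r in Hup.
      apply (Rmult_lt_compat_l eps) in Hup; [|lra].
      replace (eps * (Rabs t / eps)) with (Rabs t) in Hup by (field; lra). lra. }
    assert (Hlt : Rabs (t / INR N) < eps).
    { unfold Rdiv. rewrite Rabs_mult, Rabs_inv, (Rabs_right (INR N)) by lra.
      apply (Rmult_lt_reg_r (INR N)); [lra|].
      replace (Rabs t * / INR N * INR N) with (Rabs t) by (field; lra). lra. }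
    apply Rabs_def2 in Hlt. lra.
Qed.
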